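(* Let $T$ be a torus and $X$ a finite $T$-CW complex. For each $(q,u)\in\mathbb D^\times\times T_{\mathbb C}$ we have an equality \[ L(S^1\wedge X_+)^{q,u}=S^1\wedge LX^{q,u}_+ \] of subsets of $L(S^1\wedge X_+)$.
   Context: $\mathbb T=U(1)$, $T$ torus, $\check T=\mathrm{Hom}(\mathbb T,T)$, $T_{\mathbb C}=\check T\otimes\mathbb C^\times$, $\mathbb D^\times=\{z\in\mathbb C:0<|z|<1\}$. For a $T$-space $Z$, $LZ=\mathrm{Map}(\mathbb T,Z)$ with $\mathbb T\times T$ acting by $((r,u)\cdot\gamma)(s)=u\cdot\gamma(r^{-1}s)$. For $(q,u)$, $T(q,u)$ is the intersection of all closed subgroups $H\subset\mathbb T\times T$ with $(q,u)\in H_{\mathbb C}=\mathrm{Hom}(\hat H,\mathbb C^\times)\subset\mathbb C^\times\times T_{\mathbb C}$, and $W^{q,u}$ denotes the $T(q,u)$-fixed subspace of a $\mathbb T\times T$-space $W$. $S^1$ has trivial $T$-action, $X_+=X\sqcup\{\mathrm{pt}\}$, and $S^1\wedge LX^{q,u}_+$ is regarded as a subset of $L(S^1\wedge X_+)$ via $[z,\gamma]\mapsto(s\mapsto[z,\gamma(s)])$, the basepoint going to the constant loop at the basepoint. *)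

(* Defs.v *)
From HB Require Import structures.
From mathcomp Require Import all_boot all_order all_algebra.
From mathcomp Require Import all_classical all_reals all_analysis.
From mathcomp Require Import complex.
Set Implicit Arguments. Unset Strict Implicit. Unset Printing Implicit Defensive.
Import Order.TTheory GRing.Theory Num.Theory.
Import numFieldTopology.Exports numFieldNormedType.Exports.
Local Open Scope classical_set_scope.
Local Open Scope ring_scope.

(*  * The circle 𝕋 = U(1) is parametrized by R via s |-> exp(2 pi i s), i.e. *)
(*    𝕋 = R/Z; the rank-n torus T is R^n/Z^n, parametrized by 'rV[R]_n.     *)
(*    A T-space is a space with a continuous action of R^n which is        *)
(*    trivial on Z^n.  A loop Map(𝕋, Z) is a continuous 1-periodic map       *)
(*    R -> Z.  The group 𝕋 x T is parametrized by R * 'rV[R]_n, its closed   *)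
(*    subgroups by closed subgroups of R * 'rV[R]_n containing Z^(1+n).     *)
(*  * Characters of 𝕋 x T are indexed by (a0, a) in Z x Z^n:                *)
(*    chi(theta) = exp(2 pi i (a0 theta_0 + a . theta)).                    *)
(*    T_C = Hom(𝕋, T) (x) C^x = (C^x)^n, and chi extends to                 *)
(*    (q,u) |-> q^a0 * prod_i u_i^a_i on C^x x T_C.                         *)

Definition intvec (R : realType) (n : nat) (v : 'rV[R]_n) : Prop :=
  forall i, v ord0 i \is a Num.int.

Definition torus_action (R : realType) (n : nat) (X : topologicalType)
    (act : 'rV[R]_n -> X -> X) : Prop :=
  [/\ continuous (fun p : 'rV[R]_n * X => act p.1 p.2),
      forall x, act 0 x = x,
      forall v w x, act (v + w) x = act v (act w x)
    & forall v x, intvec v -> act v x = x].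

(* closed subgroups of T, as closed subgroups of R^n containing Z^n *)
Definition closed_subgroup_T (R : realType) (n : nat) (H : set 'rV[R]_n) : Prop :=
  [/\ closed H, forall v, intvec v -> H v & forall v w, H v -> H w -> H (v - w)].

Definition disk (R : realType) (k : nat) : set 'rV[R]_k :=
  [set d | \sum_(i < k) d ord0 i ^+ 2 <= 1].
Definition odisk (R : realType) (k : nat) : set 'rV[R]_k :=
  [set d | \sum_(i < k) d ord0 i ^+ 2 < 1].
Definition sphere (R : realType) (k : nat) : set 'rV[R]_k :=
  [set d | \sum_(i < k) d ord0 i ^+ 2 = 1].

(* Finite T-CW complex.  An equivariant cell T/H x D^k -> X is given by a  *)
(* continuous map phi : D^k -> X^H, via (tH, d) |-> t . phi d.  A Hausdorff *)
(* T-space with finitely many such cells whose open cells partition X (the  *)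
(* characteristic maps being injective on T/H x int D^k) and whose boundary *)
(* spheres land in cells of lower dimension is a finite T-CW complex (the   *)
(* weak topology condition is automatic for finitely many compact cells).  *)
Definition finite_TCW (R : realType) (n : nat) (X : topologicalType)
    (act : 'rV[R]_n -> X -> X) : Prop :=
  hausdorff_space X /\
  exists (m : nat) (k : 'I_m -> nat) (H : 'I_m -> set 'rV[R]_n)
         (phi : forall j : 'I_m, 'rV[R]_(k j) -> X),
    (forall j, closed_subgroup_T (H j)) /\
    (forall j, {within @disk R (k j), continuous (phi j)}) /\
    (forall j d h, @disk R (k j) d -> H j h -> act h (phi j d) = phi j d) /\
    (forall x, exists j t d, @odisk R (k j) d /\ x = act t (phi j d)) /\
    (forall j j' t t' d d', @odisk R (k j) d -> @odisk R (k j') d' ->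
        act t (phi j d) = act t' (phi j' d') -> j = j') /\
    (forall j t t' d d', @odisk R (k j) d -> @odisk R (k j) d' ->
        act t (phi j d) = act t' (phi j d') -> d = d' /\ H j (t - t')) /\
    (forall j d, @sphere R (k j) d ->
        exists j' t d', (k j' < k j)%N /\ @odisk R (k j') d' /\
                        phi j d = act t (phi j' d')).

Definition is_loop (R : realType) (Z : topologicalType) (g : R -> Z) : Prop :=
  continuous g /\ forall s, g (s + 1) = g s.

Definition closed_subgroup_TT (R : realType) (n : nat)
    (H : set (R * 'rV[R]_n)) : Prop :=
  [/\ closed H,
      forall th : R * 'rV[R]_n, th.1 \is a Num.int -> intvec th.2 -> H th
    & forall th th', H th -> H th' -> H (th - th')].

(* the character (a0, a) in additive coordinates *)
Definition char_exponent (R : realType) (n : nat) (a0 : int) (a : 'rV[int]_n)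
    (th : R * 'rV[R]_n) : R :=
  a0%:~R * th.1 + \sum_(i < n) (a ord0 i)%:~R * th.2 ord0 i.

(* (q,u) \in H_C = Hom(H^, C^x) ⊂ Hom((𝕋 x T)^, C^x) = C^x x T_C: the      *)
(* homomorphism chi |-> chi(q,u) kills every character trivial on H.       *)
Definition in_HC (R : realType) (n : nat) (H : set (R * 'rV[R]_n))
    (q : R[i]) (u : 'rV[R[i]]_n) : Prop :=
  forall (a0 : int) (a : 'rV[int]_n),
    (forall th, H th -> char_exponent a0 a th \is a Num.int) ->
    q ^ a0 * \prod_(i < n) (u ord0 i) ^ (a ord0 i) = 1.

Definition Tqu (R : realType) (n : nat) (q : R[i]) (u : 'rV[R[i]]_n) :
    set (R * 'rV[R]_n) :=
  [set th | forall H, closed_subgroup_TT H -> in_HC H q u -> H th].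

Definition loop_act (R : realType) (n : nat) (Z : Type)
    (act : 'rV[R]_n -> Z -> Z) (th : R * 'rV[R]_n) (g : R -> Z) : R -> Z :=
  fun s => act th.2 (g (s - th.1)).

Definition Lfix (R : realType) (n : nat) (Z : topologicalType)
    (act : 'rV[R]_n -> Z -> Z) (q : R[i]) (u : 'rV[R[i]]_n) : set (R -> Z) :=
  [set g | is_loop g /\ forall th, Tqu q u th -> loop_act act th g = g].

(* Points: the basepoint (None) and [z, x] with z in S^1 minus the          *)
(* basepoint, z represented by its parameter in ]0,1[.                      *)
Definition smash (R : realType) (X : topologicalType) : Type :=
  option ({t : R | 0 < t < 1} * X).

HB.instance Definition _ (R : realType) (X : topologicalType) :=
  Choice.on (smash R X).

(* the quotient map S^1 x X -> S^1 ∧ X_+ (S^1 parametrized by R) *)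
Definition smash_pi (R : realType) (X : topologicalType) (p : R * X) : smash R X :=
  match insub (p.1 - (Num.floor p.1)%:~R) : option {t : R | 0 < t < 1} with
  | Some t => Some (t, p.2)
  | None => None
  end.

(* quotient topology: U open iff its preimage in S^1 x X is open (the part *)
(* S^1 x {+} of S^1 x X_+ imposes no condition), and the quotient map       *)
(* R x X -> S^1 x X is itself a quotient map                                *)
Definition smash_open (R : realType) (X : topologicalType) (U : set (smash R X)) : Prop :=
  open (smash_pi (X := X) @^-1` U).

Lemma smash_openT (R : realType) (X : topologicalType) : smash_open [set: smash R X].
Proof. by rewrite /smash_open preimage_setT; exact: openT. Qed.

Lemma smash_openI (R : realType) (X : topologicalType) :
  setI_closed (@smash_open R X).
Proof. by move=> A B oA oB; rewrite /smash_open preimage_setI; exact: openI. Qed.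

Lemma smash_open_bigU (R : realType) (X : topologicalType) (I : Type)
    (f : I -> set (smash R X)) :
  (forall i, smash_open (f i)) -> smash_open (\bigcup_i f i).
Proof.
by move=> oF; rewrite /smash_open preimage_bigcup; apply: bigcup_open => i _; exact: oF.
Qed.

HB.instance Definition _ (R : realType) (X : topologicalType) :=
  isOpenTopological.Build (smash R X) (@smash_openT R X) (@smash_openI R X)
    (@smash_open_bigU R X).

Definition smash_act (R : realType) (n : nat) (X : topologicalType)
    (act : 'rV[R]_n -> X -> X) (v : 'rV[R]_n) (y : smash R X) : smash R X :=
  match y with
  | Some (t, x) => Some (t, act v x)
  | None => None
  end.

(* S^1 ∧ (LX^{q,u})_+ as a subset of L(S^1 ∧ X_+):                          *)
(* [z, g] |-> (s |-> [z, g s]), and the basepoint |-> the constant loop.     *)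
Definition smash_Lfix (R : realType) (n : nat) (X : topologicalType)
    (act : 'rV[R]_n -> X -> X) (q : R[i]) (u : 'rV[R[i]]_n) : set (R -> smash R X) :=
  [set g | g = (fun _ => None) \/
           exists (z : R) (gam : R -> X),
             Lfix act q u gam /\ g = (fun s => smash_pi (z, gam s))].

(* Main.v *)
Require Import Defs.
From HB Require Import structures.
From mathcomp Require Import all_boot all_order all_algebra.
From mathcomp Require Import all_classical all_reals all_analysis.
From mathcomp Require Import complex.
From mathcomp Require Import ring lra zify.
Import Order.TTheory GRing.Theory Num.Theory.
Import numFieldTopology.Exports numFieldNormedType.Exports.
Local Open Scope classical_set_scope.
Local Open Scope ring_scope.
Set Implicit Arguments. Unset Strict Implicit. Unset Printing Implicit Defensive.

Lemma mx_continuous (R : realType) (T : topologicalType) p r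
   (f : T -> 'M[R]_(p, r)) :
  (forall i j, continuous (fun x => f x i j)) -> continuous f.
Proof.
move=> fc x; apply/cvg_ballP => e e0.
have : \forall y \near x, forall ij : 'I_p * 'I_r, ball (f x ij.1 ij.2) e (f y ij.1 ij.2).
  apply: filter_forall => -[i j]; exact: (cvg_ball (fc i j x)).
apply: filterS => y H.
rewrite -ball_normE /= /ball_ /=. 
rewrite [X in X < _]mx_normrE.
elim/big_ind: _ => //.
  by move=> a b ha hb; rewrite gt_max ha hb.
move=> [i j] _; have := H (i, j); rewrite /ball /= !mxE.
by [].
Qed.

Section Dual.
Variable R : realType.
Variable m : nat.
Local Notation V := 'rV[R]_m.

Definition dotz (a : 'rV[int]_m) (x : V) : R :=
  \sum_i (a ord0 i)%:~R * x ord0 i.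

Lemma dotzD a x y : dotz a (x + y) = dotz a x + dotz a y.
Proof. by rewrite /dotz -big_split /=; apply: eq_bigr => i _; rewrite mxE mulrDr. Qed.

Lemma dotzN a x : dotz a (- x) = - dotz a x.
Proof. by rewrite /dotz -sumrN; apply: eq_bigr => i _; rewrite mxE mulrN. Qed.

Lemma dotzB a x y : dotz a (x - y) = dotz a x - dotz a y.
Proof. by rewrite dotzD dotzN. Qed.

Lemma dotzZ a (k : R) x : dotz a (k *: x) = k * dotz a x.
Proof.
by rewrite /dotz mulr_sumr; apply: eq_bigr => i _; rewrite mxE mulrCA.
Qed.

Lemma dotz_int a x : intvec x -> dotz a x \is a Num.int.
Proof.
move=> hx; rewrite /dotz; apply: rpred_sum => i _.
by apply: rpredM; [exact: rpred_int | exact: hx].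
Qed.

Lemma dotz_cont a : continuous (dotz a).
Proof.
suff: forall r, continuous (fun x : V => \sum_(i <- r) (a ord0 i)%:~R * x ord0 i).
  by move=> /(_ (index_enum _)).
elim => [|i r ih].
  rewrite (_ : (fun x : V => _) = fun=> 0); first exact: cst_continuous.
  by apply: funext => x; rewrite big_nil.
rewrite (_ : (fun x : V => _) = (fun x : V => (a ord0 i)%:~R * x ord0 i) +
   (fun x : V => \sum_(j <- r) (a ord0 j)%:~R * x ord0 j)); last first.
  by apply: funext => x; rewrite big_cons.
move=> x; apply: continuousD; last exact: ih.
apply: continuousM; first exact: cst_continuous.
exact: coord_continuous.
Qed.

Definition grp (H : set V) : Prop :=
  [/\ closed H, forall x, intvec x -> H x & forall x y, H x -> H y -> H (x - y)].

Lemma grp0 H : grp H -> H 0.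
Proof. by case=> _ hi _; apply: hi => i; rewrite mxE rpred0. Qed.

Lemma grpN H x : grp H -> H x -> H (- x).
Proof. by move=> hG hx; case: (hG) => _ _ hs; rewrite -sub0r; apply: hs => //; exact: grp0. Qed.

Lemma grpD H x y : grp H -> H x -> H y -> H (x + y).
Proof. by move=> hG hx hy; case: (hG) => _ _ hs; rewrite -[y]opprK; apply: hs => //; exact: grpN. Qed.

Lemma grpB H x y : grp H -> H x -> H y -> H (x - y).
Proof. by move=> [_ _ hs]; exact: hs. Qed.

Lemma grpMn H x n : grp H -> H x -> H (x *+ n).
Proof.
move=> hG hx; elim: n => [|n ih]; first by rewrite mulr0n; exact: grp0.
by rewrite mulrS; apply: grpD.
Qed.

Lemma grpZ H x (k : int) : grp H -> H x -> H ((k%:~R : R) *: x).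
Proof.
move=> hG hx; case: k => n.
  by rewrite -[X in X *: _]/(n%:R) scaler_nat; exact: grpMn.
rewrite NegzE mulrNz scaleNr; apply: grpN => //.
by rewrite -[X in X *: _]/(n.+1%:R) scaler_nat; exact: grpMn.
Qed.

Lemma grpI H x : grp H -> intvec x -> H x.
Proof. by move=> [_ hi _]; exact: hi. Qed.

Definition ann (H : set V) (a : 'rV[int]_m) := forall x, H x -> dotz a x \is a Num.int.

Definition ev (i : 'I_m) : V := \row_k ((k == i)%:R).
Definition zj (j : 'I_m) (x : V) : V := \row_k (if k == j then 0 else x ord0 k).

Lemma ev_int i : intvec (ev i).
Proof. by move=> k; rewrite mxE; case: (k == i); rewrite ?rpred0 ?rpred1. Qed.

Lemma zj_decomp j x : x = zj j x + x ord0 j *: ev j.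
Proof.
apply/rowP => k; rewrite !mxE; case: eqP => [->|_]; first by rewrite add0r mulr1.
by rewrite mulr0 addr0.
Qed.

Lemma dotz_ev a i : dotz a (ev i) = (a ord0 i)%:~R.
Proof.
rewrite /dotz (bigD1 i) //= big1 ?addr0; first by rewrite mxE eqxx mulr1.
by move=> k /negPf hk; rewrite mxE hk mulr0.
Qed.

End Dual.


Lemma subg_mulz (G : zmodType) (S : set G) :
  S 0 -> (forall s t, S s -> S t -> S (s - t)) -> forall x (k : int), S x -> S (x *~ k).
Proof.
move=> h0 hs x k hx.
have hN y : S y -> S (- y) by move=> hy; rewrite -sub0r; apply: hs.
have hD y z : S y -> S z -> S (y + z) by move=> hy hz; rewrite -[z]opprK; apply: hs => //; exact: hN.
have hMn n : S (x *+ n).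
  by elim: n => [|n ih]; [rewrite mulr0n | rewrite mulrS; exact: hD].
case: k => n; first exact: hMn.
by rewrite NegzE mulrNz; apply: hN; exact: hMn.
Qed.

Lemma subR_class (R : realType) (M : set R) : closed M ->
  (forall k : int, M k%:~R) -> (forall s t, M s -> M t -> M (s - t)) ->
  (forall t, M t) \/
  exists N : nat, (0 < N)%N /\ M (N%:R^-1) /\ forall t, M t -> (N%:R * t) \is a Num.int.
Proof.
move=> cM hZ hs.
have h0 : M 0 by rewrite -(mulr0z 1); exact: hZ.
have hmul t (k : int) : M t -> M (k%:~R * t).
  by move=> ht; rewrite mulrzl; exact: subg_mulz.
pose P := [set t | M t /\ 0 < t <= 1].
have P1 : P 1 by split; [rewrite -(mulr1z 1); exact: hZ | rewrite ltr01 lexx].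
have lbP : has_lbound P by exists 0 => t [_ /andP[/ltW]].
have infP : has_inf P by split => //; exists 1.
have c0 : 0 <= inf P by apply: lb_le_inf; [exists 1 | move=> t [_ /andP[/ltW]]].
have [cpos|] := ltP 0 (inf P); last first.
  move=> cle0; have c00 : inf P = 0 by apply/eqP; rewrite eq_le cle0 c0.
  left => t; rewrite (closure_id M).1 //.
  move=> B /nbhs_ballP [e /= e0 heB].
  have [p [Mp /andP[p0 p1]] pe] := inf_adherent e0 infP.
  rewrite c00 add0r in pe.
  exists ((Num.floor (t / p))%:~R * p); split; first exact: hmul.
  apply: heB; rewrite /ball /=.
  have hfl := Num.Theory.floor_le (t / p).
  have hfl2 := Num.Theory.floorD1_gt (t / p).
  set k := (Num.floor (t / p))%:~R in hfl *.
  rewrite intrD -/k in hfl2.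
  rewrite ler_pdivlMr // in hfl.
  rewrite ltr_pdivrMr // mulrDl mul1r in hfl2.
  rewrite ger0_norm; last by rewrite subr_ge0.
  lra.
set c := inf P in c0 cpos *.
have lbc y : P y -> c <= y by move=> Py; exact: (ge_inf lbP Py).
have c1 : c <= 1 by apply: lbc.
have Mc : M c.
  have [p [Mp /andP[p0 p1]] pe] := inf_adherent cpos infP.
  have cp : c <= p by apply: lbc; split => //; rewrite p0 p1.
  have [pc|pc] := eqVneq p c; first by rewrite -pc.
  have cltp : c < p by rewrite lt_neqAle eq_sym pc cp.
  have pc0 : 0 < p - c by rewrite subr_gt0.
  have [p' [Mp' /andP[p'0 p'1]] pe'] := inf_adherent pc0 infP.
  have cp' : c <= p' by apply: lbc; split => //; rewrite p'0 p'1.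
  have : P (p - p').
    split; first exact: hs.
    rewrite -/c in pe'; apply/andP; split; lra.
  move=> /lbc hc.
  exfalso; lra.
have hrep t : M t -> t = (Num.floor (t / c))%:~R * c.
  move=> Mt.
  have hfl := Num.Theory.floor_le (t / c).
  have hfl2 := Num.Theory.floorD1_gt (t / c).
  set k := (Num.floor (t / c))%:~R in hfl hfl2 *.
  rewrite intrD -/k in hfl2.
  rewrite ler_pdivlMr // in hfl.
  rewrite ltr_pdivrMr // mulrDl mul1r in hfl2.
  have [r0|r0] := eqVneq (t - k * c) 0; first by apply/eqP; rewrite -subr_eq0 r0.
  have : P (t - k * c).
    split; first by apply: hs => //; exact: hmul.
    apply/andP; split; last by lra.
    by rewrite lt_neqAle eq_sym r0 subr_ge0.
  move=> /lbc hc; exfalso; lra.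
have M1 : M 1 by rewrite -(mulr1z 1); exact: hZ.
have e1 := hrep 1 M1.
set k1 := Num.floor (1 / c) in e1.
have k1pos : 0 < k1.
  have h : 0 < (k1%:~R : R) * c by rewrite -e1 ltr01.
  by move: h; rewrite pmulr_lgt0 // ltr0z.
right; exists `|k1|%N; split; first by rewrite absz_gt0 gt_eqF.
have hN : (`|k1|%N)%:R = k1%:~R :> R.
  by rewrite natr_absz ger0_norm // ltW.
rewrite hN; split.
  have -> : k1%:~R^-1 = c :> R.
    have k1n0 : (k1%:~R : R) != 0 by rewrite intr_eq0 gt_eqF.
    by apply: (mulfI k1n0); rewrite mulfV.
  exact: Mc.
move=> t Mt; rewrite (hrep t Mt) mulrCA -e1 mulr1.
exact: rpred_int.
Qed.


Section Compact.
Variable R : realType.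
Variable m : nat.
Local Notation V := 'rV[R]_m.

Definition flv (j : 'I_m) (x : V) : V :=
  \row_k (if k == j then 0 else (Num.floor (x ord0 k))%:~R).

Lemma flv_int j x : intvec (flv j x).
Proof. by move=> k; rewrite mxE; case: ifP => _; rewrite ?rpred0 ?rpred_int. Qed.

Definition red j (x : V) : V := x - flv j x.

Lemma red_j j x : red j x ord0 j = x ord0 j.
Proof. by rewrite !mxE eqxx subr0. Qed.

Lemma red_k j x k : k != j -> 0 <= red j x ord0 k <= 1.
Proof.
move=> /negPf hk; rewrite !mxE hk.
have h1 := Num.Theory.floor_le (x ord0 k).
have h2 := Num.Theory.floorD1_gt (x ord0 k).
rewrite intrD in h2.
apply/andP; split; lra.
Qed.

Lemma red_H H j x : grp H -> H x -> H (red j x).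
Proof. by move=> hG hx; apply: grpB => //; apply: grpI => //; exact: flv_int. Qed.

Lemma dotz_red a j x : exists k : int, dotz a x = dotz a (red j x) + k%:~R.
Proof.
have /intrP [k hk] := dotz_int a (flv_int j x).
by exists k; rewrite /red dotzB -hk subrK.
Qed.

Definition cube (j : 'I_m) (lo hi : R) : set V :=
  [set v | forall i, (fun i => if i == j then `[lo, hi]%classic else `[0, 1]%classic) i (v ord0 i)].

Lemma cube_compact j lo hi : compact (cube j lo hi).
Proof.
apply: rV_compact => i; case: ifP => _; exact: segment_compact.
Qed.

Lemma red_cube j (x : V) lo hi : lo <= x ord0 j <= hi -> cube j lo hi (red j x).
Proof.
move=> hx i /=; case: eqP => [->|/eqP hij] /=.
  by rewrite red_j itv_boundlr /=.
by rewrite itv_boundlr /=; exact: red_k.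
Qed.

Lemma projM_closed (H : set V) j : grp H -> closed [set t | exists x : V, H x /\ x ord0 j = t].
Proof.
move=> hG t ht.
pose K := cube j (t - 1) (t + 1) `&` H.
have cK : compact K by apply: compact_closedI; [exact: cube_compact | case: hG].
pose P := (fun v : V => v ord0 j) @` K.
have cP : compact P.
  by apply: continuous_compact => //; apply: continuous_subspaceT; exact: coord_continuous.
have clP : closed P by apply: compact_closed => //; exact: Rhausdorff.
suff : P t by move=> [v [_ Hv] <-]; exists v.
apply: clP => B /nbhs_ballP [e /= e0 heB].
have e10 : 0 < Num.min e 1 by rewrite lt_min e0 ltr01.
have [s [[x [Hx <-]] hs]] := ht _ (nbhsx_ballx t _ e10) .
move: hs; rewrite /ball /= lt_min => /andP[h1 h2].
exists (x ord0 j); split; last by apply: heB.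
exists (red j x); last exact: red_j.
split; last exact: red_H.
apply: red_cube.
move: h2; rewrite ltr_distlC => /andP[h2 h3].
by apply/andP; split; apply: ltW.
Qed.

Lemma small_C (H : set V) j a : grp H ->
  (forall x, H x -> x ord0 j = 0 -> dotz a x \is a Num.int) ->
  forall eps, 0 < eps -> exists2 del, 0 < del & forall z, H z ->
    `|z ord0 j| < del -> exists k : int, `|dotz a z - k%:~R| < eps.
Proof.
move=> hG hz eps e0.
pose F := \bigcap_(k in [set: int]) [set s : R | eps <= `|s - k%:~R|].
have cF : closed F.
  apply: closed_bigI => k _.
  have cf : continuous (fun s : R => `|s - k%:~R|).
    move=> s; apply: (@continuous_comp _ _ _ (fun s : R => s - k%:~R)).
      by apply: continuousB; [exact: cvg_id | exact: cst_continuous].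
    exact: norm_continuous.
  exact: (@preimage_closed _ _ (fun s : R => `|s - k%:~R|) [set x | eps <= x] (fun _ _ => cf _) (@closed_ge R eps)).
pose S := (cube j (-1) 1 `&` H) `&` (dotz a @^-1` F).
have cS : compact S.
  apply: compact_closedI; last first.
    by apply: preimage_closed => // x _; exact: dotz_cont.
  by apply: compact_closedI; [exact: cube_compact | case: hG].
pose P := (fun v : V => v ord0 j) @` S.
have cP : compact P.
  by apply: continuous_compact => //; apply: continuous_subspaceT; exact: coord_continuous.
have clP : closed P by apply: compact_closed => //; exact: Rhausdorff.
have nP0 : ~ P 0.
  move=> [v [[_ Hv] Fv] vj].
  have /intrP [k hk] := hz v Hv vj.
  have := Fv k I; rewrite /= hk subrr normr0 => h; move: e0; rewrite ltNge h //.
have : \forall p \near (0 : R), ~ P p.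
  by apply: contrapT => hn; apply: nP0; move: clP; rewrite closedE => /(_ 0); apply.
move=> /nbhs_ballP [d /= d0 hd].
exists (Num.min d 1); first by rewrite lt_min d0 ltr01.
move=> z Hz; rewrite lt_min => /andP[zd z1].
case: (pselect (exists k : int, `|dotz a (red j z) - k%:~R| < eps)) => [[k hk]|hne].
  have [k' hk'] := dotz_red a j z.
  exists (k + k'); rewrite hk' intrD opprD addrACA subrr addr0.
  by [].
exfalso; apply: (hd (z ord0 j)).
  by rewrite /ball /= sub0r normrN.
exists (red j z); last exact: red_j.
split.
  split; last exact: red_H.
  apply: red_cube; move: z1; rewrite ltr_norml => /andP[h1 h2].
  by apply/andP; split; apply: ltW.
move=> k _ /=; rewrite leNgt; apply/negP => hk; apply: hne; exists k.
exact: hk.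
Qed.

End Compact.


Section Halving.
Variable R : realType.
Variable m : nat.
Local Notation V := 'rV[R]_m.

Lemma int_small (x : R) : x \is a Num.int -> `|x| < 1 -> x = 0.
Proof.
case/intrP => k ->; rewrite -intr_norm ltrz1 => hk.
suff -> : k = 0 by [].
by lia.
Qed.

Lemma int_closed (x : R) : (forall eps, 0 < eps -> exists k : int, `|x - k%:~R| < eps) ->
  x \is a Num.int.
Proof.
move=> h.
have h2 : (0:R) < 1 / 2 by lra.
have [k0 hk0] := h _ h2.
have [e|ne] := eqVneq x k0%:~R; first by rewrite e rpred_int.
have d0 : 0 < `|x - k0%:~R| by rewrite normr_gt0 subr_eq0.
have [k1 hk1] := h _ d0.
have : `|(k0%:~R - k1%:~R : R)| < 1.
  rewrite (_ : k0%:~R - k1%:~R = (x - k1%:~R) - (x - k0%:~R)); last by ring.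
  by apply: le_lt_trans (ler_normB _ _) _; lra.
rewrite -intrB => /(int_small (rpred_int _ _)) /eqP; rewrite intr_eq0 subr_eq0 => /eqP e01.
by move: hk1; rewrite -e01 ltxx.
Qed.

Lemma pow2_big (x : R) : exists n : nat, x < 2 ^+ n.
Proof.
exists (`|Num.ceil x|%N.+1).
have h1 : x <= (Num.ceil x)%:~R := Num.Theory.ceil_ge x.
have h2 : (Num.ceil x)%:~R <= (`|Num.ceil x|%N)%:R :> R.
  by rewrite natr_absz ler_int ler_norm.
have h3 : ((`|Num.ceil x|%N.+1)%:R : R) <= 2 ^+ (`|Num.ceil x|%N.+1).
  by rewrite -natrX ler_nat ltnW // ltn_expl.
have h4 : ((`|Num.ceil x|%N)%:R : R) < (`|Num.ceil x|%N.+1)%:R by rewrite ltr_nat.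
lra.
Qed.

Lemma G_lemma (H : set V) j a : grp H ->
  (forall t, exists x, H x /\ x ord0 j = t) ->
  (forall x, H x -> x ord0 j = 0 -> dotz a x \is a Num.int) ->
  exists c : int, forall z, H z -> dotz a z - c%:~R * z ord0 j \is a Num.int.
Proof.
move=> hG hM hz.
have q0 : (0 : R) < 1 / 4 by lra.
have [d0 d0pos hd0] := small_C hG hz q0.
pose t0 := d0 / 2.
have t0pos : 0 < t0 by rewrite /t0; lra.
have [z0 [Hz0 z0j]] := hM t0.
have [k0 hk0] : exists k : int, `|dotz a z0 - k%:~R| < 1 / 4.
  by apply: hd0 => //; rewrite z0j gtr0_norm // /t0; lra.
set s0 := dotz a z0 - k0%:~R in hk0.
have p2 n : (0 : R) < 2 ^+ n by apply: exprn_gt0; lra.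
have p21 n : (1 : R) <= 2 ^+ n by apply: exprn_ege1; lra.
have halve : forall n : nat, exists z, [/\ H z, z ord0 j = t0 / 2 ^+ n &
    dotz a z - s0 / 2 ^+ n \is a Num.int].
  elim => [|n [z [Hz zj zi]]].
    by exists z0; rewrite expr0 !divr1; split => //; rewrite /s0 opprB addrCA subrr addr0 rpred_int.
  have [z' [Hz' z'j]] := hM (t0 / 2 ^+ n.+1).
  have [k' hk'] : exists k : int, `|dotz a z' - k%:~R| < 1 / 4.
    apply: hd0 => //; rewrite z'j gtr0_norm ?divr_gt0 //.
    rewrite ltr_pdivrMr ?p2 //.
    have := @ler_peMr _ (2 ^+ n.+1) d0 (ltW d0pos) (p21 _).
    rewrite /t0; lra.
  set sg := dotz a z' - k'%:~R in hk'.
  have Hw : H (z' + z' - z) by apply: grpB => //; apply: grpD.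
  have wj : (z' + z' - z) ord0 j = 0.
    rewrite !mxE z'j zj exprS; field.
    by rewrite gt_eqF ?p2.
  have wi := hz _ Hw wj.
  have hint : 2 * sg - s0 / 2 ^+ n \is a Num.int.
    rewrite (_ : 2 * sg - s0 / 2 ^+ n = dotz a (z' + z' - z) + (dotz a z - s0 / 2 ^+ n) - (2 * k')%:~R).
      by apply: rpredB; [apply: rpredD|exact: rpred_int].
    by rewrite dotzB dotzD /sg intrM; ring.
  have hs0 : `|s0 / 2 ^+ n| <= `|s0|.
    rewrite normrM normfV (gtr0_norm (p2 n)) ler_pdivrMr ?p2 //.
    exact: ler_peMr.
  have hab : `|2 * sg - s0 / 2 ^+ n| < 1.
    apply: le_lt_trans (ler_normB _ _) _.
    rewrite normrM (gtr0_norm (_ : (0:R) < 2)); last by lra.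
    lra.
  have e2 := int_small hint hab.
  exists z'; split => //.
  rewrite (_ : dotz a z' - s0 / 2 ^+ n.+1 = k'%:~R + (2 * sg - s0 / 2 ^+ n) / 2).
    by rewrite e2 mul0r addr0 rpred_int.
  rewrite /sg exprS; field.
  by rewrite gt_eqF ?p2.
pose lam := s0 / t0.
have dyad : forall n (p : int), exists w, [/\ H w, w ord0 j = p%:~R * (t0 / 2 ^+ n) &
    dotz a w - lam * w ord0 j \is a Num.int].
  move=> n p; have [z [Hz zj zi]] := halve n.
  exists (p%:~R *: z); split; first exact: grpZ.
    by rewrite mxE zj.
  rewrite dotzZ mxE zj (_ : _ - _ = p%:~R * (dotz a z - s0 / 2 ^+ n)).
    by apply: rpredM; [exact: rpred_int | exact: zi].
  rewrite /lam; field.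
  by rewrite !gt_eqF ?p2.
have gen : forall z, H z -> dotz a z - lam * z ord0 j \is a Num.int.
  move=> z Hz; apply: int_closed => eps e0.
  have e20 : 0 < eps / 2 by lra.
  have [del delpos hdel] := small_C hG hz e20.
  have l1 : 0 < `|lam| + 1 by rewrite ltr_wpDl.
  pose eta := Num.min del (eps / 2 / (`|lam| + 1)).
  have etapos : 0 < eta by rewrite lt_min delpos divr_gt0.
  have [n hn] := pow2_big (t0 / eta).
  pose u := t0 / 2 ^+ n.
  have upos : 0 < u by rewrite divr_gt0.
  have ueta : u < eta.
    by rewrite /u ltr_pdivrMr // mulrC -ltr_pdivrMr.
  pose p := Num.floor (z ord0 j / u).
  have [w [Hw wj wi]] := dyad n p.
  have hfl := Num.Theory.floor_le (z ord0 j / u).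
  have hfl2 := Num.Theory.floorD1_gt (z ord0 j / u).
  rewrite intrD -/p in hfl2; rewrite -/p in hfl.
  rewrite ler_pdivlMr // in hfl.
  rewrite ltr_pdivrMr // mulrDl mul1r in hfl2.
  rewrite -/u in wj.
  have etadel : eta <= del by rewrite /eta ge_min lexx.
  have etalam : eta <= eps / 2 / (`|lam| + 1) by rewrite /eta ge_min lexx orbT.
  rewrite ler_pdivlMr // mulrDr mulr1 in etalam.
  have [k2 hk2] : exists k : int, `|dotz a (z - w) - k%:~R| < eps / 2.
    apply: hdel; first exact: grpB.
    rewrite !mxE wj ger0_norm; last by rewrite subr_ge0.
    lra.
  have /intrP [k1 hk1] := wi.
  exists (k1 + k2).
  have dz : `|z ord0 j - w ord0 j| <= eta by rewrite wj ger0_norm ?subr_ge0; lra.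
  have hl : `|lam| * `|z ord0 j - w ord0 j| <= eta * `|lam|.
    by rewrite mulrC ler_wpM2r.
  rewrite (_ : _ - _ = (dotz a (z - w) - k2%:~R) - lam * (z ord0 j - w ord0 j) +
      (dotz a w - lam * w ord0 j - k1%:~R)); last first.
    by rewrite dotzB intrD; ring.
  rewrite -hk1 subrr addr0.
  apply: le_lt_trans (ler_normB _ _) _.
  rewrite normrM; lra.
have evH : H (ev R j) by apply: grpI => //; exact: ev_int.
have := gen _ evH; rewrite dotz_ev mxE eqxx mulr1 => hl.
have : lam \is a Num.int.
  rewrite (_ : lam = (a ord0 j)%:~R - ((a ord0 j)%:~R - lam)); last by ring.
  by apply: rpredB => //; exact: rpred_int.
case/intrP => c ec; exists c => z Hz; rewrite -ec; exact: gen.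
Qed.

End Halving.


Section Sep.
Variable R : realType.
Variable m : nat.
Local Notation V := 'rV[R]_m.
Local Notation ev := (@ev R m).

Definition evz (jj : 'I_m) (c : int) : 'rV[int]_m := \row_k (if k == jj then c else 0).

Lemma dotz_evz jj c (x : V) : dotz (evz jj c) x = c%:~R * x ord0 jj.
Proof.
rewrite /dotz (bigD1 jj) //= big1 ?addr0; first by rewrite mxE eqxx.
by move=> k /negPf hk; rewrite mxE hk mul0r.
Qed.

Lemma dotz_subl a b (x : V) : dotz (a - b) x = dotz a x - dotz b x.
Proof.
rewrite /dotz -sumrB; apply: eq_bigr => i _.
by rewrite !mxE intrB mulrBl.
Qed.

Lemma zjB jj (x y : V) : zj jj (x - y) = zj jj x - zj jj y.
Proof. by apply/rowP => k; rewrite !mxE; case: ifP; rewrite ?subr0. Qed.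

Lemma zj_id jj (x : V) : x ord0 jj = 0 -> zj jj x = x.
Proof. by move=> h; apply/rowP => k; rewrite !mxE; case: eqP => // ->. Qed.

Lemma zj_ev jj (x : V) i t : zj jj (x + t *: ev i) = if i == jj then zj jj x else zj jj x + t *: ev i.
Proof.
apply/rowP => k; rewrite [LHS]mxE; case: (i =P jj) => [->|hi]; rewrite !mxE.
  by case: eqP => // _; rewrite mulr0 addr0.
case: (k =P jj) => [e|_]; last by [].
rewrite add0r; case: (k =P i) => [e'|_]; last by rewrite mulr0.
by exfalso; apply: hi; rewrite -e -e'.
Qed.

Lemma zj_cont jj : continuous (zj jj : V -> V).
Proof.
apply: mx_continuous => i k.
have h : forall f g : V -> R, f = g -> continuous g -> continuous f by move=> f g e; subst f.
apply: (h _ (fun x : V => if k == jj then (0:R) else x ord0 k)).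
  by apply: funext => x; rewrite mxE.
by case: (k == jj); [exact: cst_continuous | exact: coord_continuous].
Qed.

Lemma zj_int jj (x : V) : intvec x -> intvec (zj jj x).
Proof. by move=> hx k; rewrite mxE; case: ifP => _; rewrite ?rpred0. Qed.

Definition freeu (j : nat) (H : set V) :=
  forall x (i : 'I_m) t, (i < j)%N -> H x -> H (x + t *: ev i).

Lemma all_free H j y : grp H -> freeu j H -> (m <= j)%N -> H y.
Proof.
move=> hG hf hmj.
suff : forall p, (p <= m)%N -> H (\row_(i < m) (if (i < p)%N then y ord0 i else 0)).
  move=> /(_ m (leqnn m)); congr H; apply/rowP => i; rewrite mxE ltn_ord //.
elim => [_|p ih hp].
  rewrite (_ : \row_i _ = 0); first exact: grp0.
  by apply/rowP => i; rewrite !mxE.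
have hpm : (p < m)%N by [].
rewrite (_ : \row_i _ = \row_(i < m) (if (i < p)%N then y ord0 i else 0) +
   y ord0 (Ordinal hpm) *: ev (Ordinal hpm)).
  apply: hf; last exact: ih (ltnW hp).
  by apply: leq_trans hmj.
apply/rowP => i; rewrite !mxE ltnS leq_eqVlt.
case: (ltngtP i p) => hip /=.
- suff -> : (i == Ordinal hpm) = false by rewrite mulr0 addr0.
  by apply/negP => /eqP hi; move: hip; rewrite hi /= ltnn.
- suff -> : (i == Ordinal hpm) = false by rewrite mulr0 addr0.
  by apply/negP => /eqP hi; move: hip; rewrite hi /= ltnn.
- have -> : i = Ordinal hpm by apply: val_inj.
  by rewrite eqxx mulr1 add0r.
Qed.

Lemma ann_free H (jj : 'I_m) a : grp H -> freeu jj.+1 H -> ann H a -> a ord0 jj = 0.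
Proof.
move=> hG hf ha.
have h t : (t * (a ord0 jj)%:~R : R) \is a Num.int.
  have := ha _ (hf 0 jj t (ltnSn _) (grp0 hG)).
  by rewrite add0r dotzZ /dotz (bigD1 jj) //= big1 ?addr0 ?mxE ?eqxx ?mulr1 // => k /negPf hk; rewrite mxE hk mulr0.
case: (eqVneq (a ord0 jj) 0) => // hne; exfalso.
have hne' : ((a ord0 jj)%:~R : R) != 0 by rewrite intr_eq0.
have := h (1 / 2 / (a ord0 jj)%:~R).
rewrite divfK // => hint.
have h1 : `|(1 / 2 : R)| < 1 by rewrite ger0_norm; lra.
have := int_small hint h1; lra.
Qed.


Theorem dual_sep : forall k j, (m <= j + k)%N -> forall (H : set V) y, grp H -> freeu j H -> ~ H y ->
  exists a, ann H a /\ ~ (dotz a y \is a Num.int).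
Proof.
elim => [|k ih] j hmk H y hG hf hy.
  by exfalso; apply: hy; apply: (all_free y hG hf); rewrite addn0 in hmk.
case: (leqP m j) => hmj; first by exfalso; apply: hy; exact: (all_free y hG hf hmj).
pose jj := Ordinal hmj.
pose H2 := [set x : V | H (zj jj x)].
have hG2 : grp H2.
  split.
  - case: hG => cH _ _.
    exact: (@preimage_closed _ _ (zj jj) H (fun x _ => @zj_cont jj x) cH).
  - by move=> x hx; rewrite /H2 /=; apply: grpI => //; exact: zj_int.
  - by move=> x z hx hz; rewrite /H2 /= zjB; exact: grpB.
have hf2 : freeu j.+1 H2.
  move=> x i t hi hx; rewrite /H2 /= zj_ev.
  case: (i =P jj) => [_|hij]; first exact: hx.
  apply: hf => //.
  rewrite ltnS leq_eqVlt in hi; case/orP: hi => // /eqP e.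
  by exfalso; apply: hij; apply: val_inj.
have hmk2 : (m <= j.+1 + k)%N by rewrite addSnnS.
have ih2 := ih j.+1 hmk2 H2.
have hH2 x : H x -> x ord0 jj = 0 -> H2 x by move=> hx hx0; rewrite /H2 /= zj_id.
pose M := [set t | exists x : V, H x /\ x ord0 jj = t].
have cM : closed M := projM_closed (j:=jj) hG.
have MZ : forall kk : int, M kk%:~R.
  move=> kk; exists (kk%:~R *: ev jj); split; last by rewrite !mxE eqxx mulr1.
  by apply: grpZ => //; apply: grpI => //; exact: ev_int.
have Ms : forall s t, M s -> M t -> M (s - t).
  move=> s t [x [hx <-]] [z [hz <-]]; exists (x - z); split; first exact: grpB.
  by rewrite !mxE.
case: (subR_class cM MZ Ms) => [hall | [N [N0 [MN hN]]]].
  have [x [Hx xj]] := hall (y ord0 jj).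
  have hyx : ~ H2 (y - x).
    rewrite /H2 /= zj_id; last by rewrite !mxE xj subrr.
    by move=> h; apply: hy; rewrite -(subrK x y); exact: grpD.
  have [a2 [ha2 hna2]] := ih2 (y - x) hG2 hf2 hyx.
  have [c hc] := G_lemma hG hall (fun z hz hz0 => ha2 z (hH2 z hz hz0)).
  exists (a2 - evz jj c); split.
    by move=> z hz; rewrite dotz_subl dotz_evz; exact: hc.
  rewrite dotz_subl dotz_evz => hint; apply: hna2.
  have hx' := hc x Hx.
  rewrite (_ : dotz a2 (y - x) = (dotz a2 y - c%:~R * y ord0 jj) - (dotz a2 x - c%:~R * x ord0 jj)).
    exact: rpredB.
  by rewrite dotzB xj; ring.
have Nn0 : (N%:R : R) != 0 by rewrite pnatr_eq0 -lt0n.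
have [c0 [Hc0 c0j]] := MN.
case: (boolP ((N%:R * y ord0 jj : R) \is a Num.int)) => hNy; last first.
  exists (evz jj N%:Z); split.
    by move=> z hz; rewrite dotz_evz; apply: hN; exists z.
  by rewrite dotz_evz; apply/negP.
case/intrP: hNy => p hp.
pose w := y - p%:~R *: c0.
have wj : w ord0 jj = 0.
  rewrite !mxE c0j; apply: (mulfI Nn0); rewrite mulr0 mulrBr hp; field.
  by [].
have hw : ~ H2 w.
  rewrite /H2 /= zj_id // => h; apply: hy.
  rewrite (_ : y = w + p%:~R *: c0); last by rewrite subrK.
  by apply: grpD => //; exact: grpZ.
have [a2 [ha2 hna2]] := ih2 w hG2 hf2 hw.
have a2j : a2 ord0 jj = 0 := @ann_free H2 jj a2 hG2 hf2 ha2.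
have hr : (N%:R * dotz a2 c0) \is a Num.int.
  have hv1 : H ((N%:Z)%:~R *: c0) by apply: grpZ.
  have hv2 : H (ev jj) by apply: grpI => //; exact: ev_int.
  have hv : H2 ((N%:Z)%:~R *: c0 - ev jj).
    apply: hH2; first exact: grpB.
    by rewrite !mxE c0j eqxx /= pmulrn divff // subrr.
  have := ha2 _ hv; rewrite dotzB dotzZ dotz_ev a2j subr0.
  by [].
case/intrP: hr => r0 hr0.
exists (a2 - evz jj r0); split.
  move=> z hz; rewrite dotz_subl dotz_evz.
  have [kz hkz] : exists kz : int, N%:R * z ord0 jj = kz%:~R.
    by apply/intrP; apply: hN; exists z.
  have hz2 : H2 (z - kz%:~R *: c0).
    apply: hH2; first by apply: grpB => //; exact: grpZ.
    rewrite !mxE c0j; apply: (mulfI Nn0); rewrite mulr0 mulrBr hkz; field.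
    by [].
  have := ha2 _ hz2; rewrite dotzB dotzZ.
  rewrite (_ : dotz a2 z - r0%:~R * z ord0 jj = dotz a2 z - kz%:~R * dotz a2 c0) //.
  rewrite -hr0 (_ : z ord0 jj = kz%:~R / N%:R); first by field.
  by rewrite -hkz; field.
rewrite dotz_subl dotz_evz => hint; apply: hna2.
rewrite (_ : dotz a2 w = dotz a2 y - r0%:~R * y ord0 jj) //.
rewrite /w dotzB dotzZ -hr0 (_ : y ord0 jj = p%:~R / N%:R); first by field.
by rewrite -hp; field.
Qed.

End Sep.


Section Conv.
Variable R : realType.
Variable n : nat.

Definition Efun (x : 'rV[R]_(n.+1)) : R * 'rV[R]_n := (x ord0 ord0, \row_i x ord0 (lift ord0 i)).
Definition Ffun (th : R * 'rV[R]_n) : 'rV[R]_(n.+1) :=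
  \row_k (if unlift ord0 k is Some i then th.2 ord0 i else th.1).

Lemma EF th : Efun (Ffun th) = th.
Proof.
case: th => a b; rewrite /Efun /Ffun /=; congr (_, _).
  by rewrite mxE unlift_none.
by apply/rowP => i; rewrite !mxE liftK.
Qed.

Lemma EB x y : Efun (x - y) = Efun x - Efun y.
Proof.
rewrite /Efun; congr (_, _); first by rewrite !mxE.
by apply/rowP => i; rewrite !mxE.
Qed.

Lemma Econt : continuous Efun.
Proof.
move=> x.
have F1 : Filter (nbhs x) by exact: nbhs_filter.
apply: (@cvg_pair _ _ _ (nbhs x) (nbhs (x ord0 ord0)) (nbhs (\row_i x ord0 (lift ord0 i))) F1).
  exact: coord_continuous.
have: continuous (fun y : 'rV[R]_(n.+1) => \row_i y ord0 (lift ord0 i) : 'rV[R]_n); last by apply.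
apply: mx_continuous => i k.
have h : forall f g : 'rV[R]_(n.+1) -> R, f = g -> continuous g -> continuous f by move=> f g e; subst f.
apply: (h _ (fun x : 'rV[R]_(n.+1) => x ord0 (lift ord0 k))).
  by apply: funext => y; rewrite mxE.
exact: coord_continuous.
Qed.

Lemma dotz_F a th : dotz a (Ffun th) =
  char_exponent (a ord0 ord0) (\row_i a ord0 (lift ord0 i)) th.
Proof.
rewrite /dotz /char_exponent big_ord_recl; congr (_ + _).
  by rewrite mxE unlift_none.
by apply: eq_bigr => i _; rewrite !mxE liftK.
Qed.

End Conv.


Lemma normXz (F : numFieldType) (x : F) (z : int) : `|x ^ z| = `|x| ^ z.
Proof. by case: z => k /=; rewrite ?normfV normrX. Qed.

Section Logs.
Local Open Scope complex_scope.
Variable R : realType.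

Lemma lnXz (x : R) (z : int) : 0 < x -> ln (x ^ z) = z%:~R * ln x.
Proof.
move=> x0; case: z => k /=.
  by rewrite lnXn // mulrzl pmulrn.
rewrite lnV; last by rewrite posrE exprn_gt0.
by rewrite lnXn // mulrzl NegzE mulrNz pmulrn.
Qed.

Lemma ln_prod (k : nat) (f : 'I_k -> R) : (forall i, 0 < f i) ->
  ln (\prod_i f i) = \sum_i ln (f i).
Proof.
move=> hf.
have : 0 < \prod_i f i /\ ln (\prod_i f i) = \sum_i ln (f i).
  apply: (big_rec2 (fun y1 y2 => 0 < y1 /\ ln y1 = y2)).
    by rewrite ln1 ltr01.
  move=> i y1 y2 _ [h1 h2]; split; first by rewrite mulr_gt0.
  by rewrite lnM ?posrE // h2.
by case.
Qed.

Lemma normC_real (x : R[i]) : `|x| = (complex.Re `|x|)%:C.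
Proof. by rewrite normc_def. Qed.

Lemma normC_pos (x : R[i]) : x != 0 -> 0 < complex.Re `|x|.
Proof.
move=> hx; have : 0 < `|x| by rewrite normr_gt0.
by rewrite ltcE => /andP[].
Qed.

End Logs.

Section Line.
Local Open Scope complex_scope.
Variable R : realType.
Variable n : nat.

Definition qline (q : R[i]) (u : 'rV[R[i]]_n) (r : R) : 'rV[R]_n :=
  \row_i (r * ln (complex.Re `|u ord0 i|) / ln (complex.Re `|q|)).

Lemma char_line (a0 : int) (a : 'rV[int]_n) (q : R[i]) (u : 'rV[R[i]]_n)
    (hq : 0 < `|q| < 1) (hu : forall i, u ord0 i != 0)
    (e : q ^ a0 * \prod_(i < n) (u ord0 i) ^ (a ord0 i) = 1) (r : R) :
  char_exponent a0 a (r, qline q u r) = 0.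
Proof.
have q0 : q != 0 by case/andP: hq; rewrite normr_gt0.
pose rq := complex.Re `|q|.
pose ru i := complex.Re `|u ord0 i|.
have rq0 : 0 < rq by exact: normC_pos.
have ru0 i : 0 < ru i by exact: normC_pos.
have rq1 : rq < 1.
  case/andP: hq => _; rewrite normC_real -/rq.
  by rewrite (_ : 1 = 1%:C) // ltcR.
have lq : ln rq < 0 by rewrite ln_lt0 // rq0 rq1.
have e2 : rq ^ a0 * \prod_(i < n) (ru i) ^ (a ord0 i) = 1.
  have : `|q ^ a0 * \prod_(i < n) (u ord0 i) ^ (a ord0 i)| = 1 by rewrite e normr1.
  rewrite normrM normr_prod normXz.
  under eq_bigr do rewrite normXz.
  rewrite normC_real -/rq.
  under eq_bigr do rewrite normC_real.
  rewrite -fmorphXz.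
  under eq_bigr do rewrite -fmorphXz.
  rewrite -rmorph_prod -rmorphM (_ : 1 = 1%:C) //.
  by move=> /complexI.
have S : a0%:~R * ln rq + \sum_(i < n) (a ord0 i)%:~R * ln (ru i) = 0.
  have := congr1 (@ln R) e2; rewrite ln1 lnM ?posrE ?exprz_gt0 ?prodr_gt0 //; last first.
    by move=> i _; apply: exprz_gt0.
  rewrite lnXz // ln_prod; last by move=> i; apply: exprz_gt0.
  by under eq_bigr do rewrite lnXz //.
rewrite /char_exponent /=.
rewrite (_ : \sum_(i < n) _ = r / ln rq * \sum_(i < n) (a ord0 i)%:~R * ln (ru i)); last first.
  rewrite mulr_sumr; apply: eq_bigr => i _; rewrite mxE; ring.
rewrite (_ : a0%:~R * r = r / ln rq * (a0%:~R * ln rq)); last by field; rewrite lt_eqF.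
by rewrite -mulrDr S mulr0.
Qed.

End Line.

Lemma line_Tqu (R : realType) (n : nat) (q : R[i]) (u : 'rV[R[i]]_n)
    (hq : 0 < `|q| < 1) (hu : forall i, u ord0 i != 0) (r : R) :
  Tqu q u (r, qline q u r).
Proof.
move=> H hH hHC.
pose Hh := (@Efun R n) @^-1` H.
have gH : grp Hh.
  case: hH => cH hi hs; split.
  - exact: (@preimage_closed _ _ (@Efun R n) H (fun x _ => @Econt R n x) cH).
  - move=> x hx; apply: hi => /=; first exact: hx.
    by move=> i; rewrite mxE; exact: hx.
  - by move=> x y hx hy; rewrite /Hh /= EB; exact: hs.
have hf : freeu 0 Hh by move=> x i t.
apply: contrapT => hn.
have hn' : ~ Hh (Ffun (r, qline q u r)) by rewrite /Hh /= EF.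
have [a [ha hna]] := @dual_sep R n.+1 n.+1 0 (leqnn _) Hh _ gH hf hn'.
apply: hna; rewrite dotz_F char_line ?rpred0 //.
apply: hHC => th hth; rewrite -dotz_F; apply: ha.
by rewrite /Hh /= EF.
Qed.


Lemma smash_act_pi (R : realType) (n : nat) (X : topologicalType)
    (act : 'rV[R]_n -> X -> X) v z x :
  smash_act act v (smash_pi (z, x)) = smash_pi (z, act v x).
Proof. by rewrite /smash_pi /=; case: insub. Qed.

Lemma smash_pi_val (R : realType) (X : topologicalType) (t : {t : R | 0 < t < 1}) (x : X) :
  smash_pi (val t, x) = Some (t, x).
Proof.
rewrite /smash_pi /=.
have -> : Num.floor (val t) = 0.
  apply: floor_def; case/andP: (valP t) => h1 h2.
  by rewrite add0r; apply/andP; split; [exact: ltW|].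
by rewrite subr0 valK.
Qed.

Lemma smash_pi_cont (R : realType) (X : topologicalType) (z : R) (gam : R -> X) :
  continuous gam -> continuous (fun s => smash_pi (z, gam s)).
Proof.
move=> gc.
have pc : continuous (fun s : R => (z, gam s)).
  move=> s; apply: (@cvg_pair _ _ _ (nbhs s) (nbhs z) (nbhs (gam s))).
    exact: cvg_cst.
  exact: gc.
apply/continuousP => A oA.
have oA' : open (@smash_pi R X @^-1` A) := oA.
exact: ((continuousP _).1 pc _ oA').
Qed.

Lemma qline_cont (R : realType) (n : nat) (q : R[i]) (u : 'rV[R[i]]_n) :
  continuous (qline q u).
Proof.
apply: mx_continuous => i k.
have h : forall f g : R -> R, f = g -> continuous g -> continuous f by move=> f g e; subst f.
apply: (h _ ( *%R (ln (complex.Re `|u ord0 k|) / ln (complex.Re `|q|)))).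
  by apply: funext => s; rewrite mxE -mulrA mulrC.
exact: mulrl_continuous.
Qed.

Unset Implicit Arguments.

Theorem mainTheorem18 (R : realType) (n : nat) (X : topologicalType)
    (act : 'rV[R]_n -> X -> X) (Hact : torus_action act) (HCW : finite_TCW act)
    (q : R[i]) (u : 'rV[R[i]]_n)
    (hq : 0 < `|q| < 1) (hu : forall i, u ord0 i != 0) :
  Lfix (smash_act act) q u = smash_Lfix act q u.
Proof.
apply: funext => g; apply: propext; split.
  move=> [[gc gp] gfix].
  have key s : g s = smash_act act (qline q u s) (g 0).
    have := congr1 (fun f => f s) (gfix _ (line_Tqu hq hu s)).
    by rewrite /loop_act /= subrr.
  case e0: (g 0) => [[t0 x0]|]; last first.
    by left; apply: funext => s; rewrite key e0.
  right; exists (val t0), (fun s => act (qline q u s) x0).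
  have gs s : g s = Some (t0, act (qline q u s) x0) by rewrite key e0.
  split; last by apply: funext => s; rewrite gs smash_pi_val.
  split.
    split.
      case: Hact => hc _ _ _.
      move=> s; apply: (@continuous_comp _ _ _ (fun s => (qline q u s, x0)) (fun p => act p.1 p.2)).
        apply: (@cvg_pair _ _ _ (nbhs s) (nbhs (qline q u s)) (nbhs x0)).
          exact: qline_cont.
        exact: cvg_cst.
      exact: hc.
    move=> s; have := gp s; rewrite !gs; by case.
  move=> th hth; apply: funext => s.
  have := congr1 (fun f => f s) (gfix th hth).
  by rewrite /loop_act /= !gs /=; case.
move=> [->|[z [gam [[[gc gp] gfix] ->]]]].
  split; first by split; [exact: cst_continuous | by []].
  by move=> th _; apply: funext => s.
split; first split.
- exact: smash_pi_cont.
- by move=> s; rewrite gp.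
move=> th hth; apply: funext => s.
rewrite /loop_act /= smash_act_pi.
by have := congr1 (fun f => f s) (gfix th hth); rewrite /loop_act /= => ->.
Qed.
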